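(* Let $\Pi,\Sigma$ be finite signatures and let $\gamma$ be a gadget (with finite component structures) mapping $\Pi$-structures to $\Sigma$-structures. Then there is a Datalog$^\cup$ reduction $\psi$ such that, for every $\Pi$-structure $\mathbf A$, the structures $\gamma(\mathbf A)$ and $\psi(\mathbf A)$ are homomorphically equivalent.
   Context: Structures. A (multisorted relational) signature consists of types and relation symbols, each symbol $R$ having an arity $\mathrm{ar}_R$, a tuple of types. A structure $\mathbf A$ consists of a set $A_t$ per type and relations $R^{\mathbf A}\subseteq A_{\mathrm{ar}_R(1)}\times\dots\times A_{\mathrm{ar}_R(k)}$. A homomorphism is a type-preserving family of maps preserving all relations. Two structures are homomorphically equivalent if there are homomorphisms in both directions. Gadgets. A gadget $\gamma$ mapping $\Pi$-structures to $\Sigma$-structures consists of a $\Sigma$-structure $\mathbf D_t^\gamma$ for each $\Pi$-type $t$, a $\Sigma$-structure $\mathbf R^\gamma$ for each $\Pi$-symbol $R$, and a homomorphism $p_{R,i}^\gamma\colon\mathbf D^\gamma_{\mathrm{ar}_R(i)}\to\mathbf R^\gamma$ for each $\Pi$-symbol $R$ of arity $k$ and each $i\in[k]$. The gadget replacement $\gamma(\mathbf A)$ of a $\Pi$-structure $\mathbf A$ is obtained as follows: take the disjoint union of a copy of $\mathbf D^\gamma_t$ for each $a\in A_t$ (elements denoted $(a;d)$), and a copy of $\mathbf R^\gamma$ for each symbol $R$ and each tuple $a\in R^{\mathbf A}$ (elements denoted $(a;e)$); then, for every such $a=(a_1,\dots,a_k)\in R^{\mathbf A}$, $i\in[k]$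 and $e\in\mathbf D^\gamma_{\mathrm{ar}_R(i)}$, identify $(a;p^\gamma_{R,i}(e))$ with $(a_i;e)$; $\gamma(\mathbf A)$ is the quotient by the equivalence relation generated by these identifications, with relations the images of the relations of the copies. Datalog programs and interpretations. A Datalog program with input signature $\Pi$ consists of a signature $\Delta\supseteq\Pi$ with the same types, a finite set of rules $t_0\leftarrow t_1,\dots,t_r$ with $t_i$ atomic $\Delta$-formulas (typed relational atoms or equalities of same-typed variables; heads use neither $\Pi$-symbols nor equality), and a designated output symbol, evaluated by least-fixed-point semantics. A Datalog interpretation $\phi$ from $\Pi$-structures to $\Sigma$-structures consists of a Datalog program $\phi_t$ for each $\Sigma$-type $t$ and $\phi_R$ for each $\Sigma$-symbol $R$ (arity of $\phi_R$ = concatenation of arities of $\phi_{\mathrm{ar}_R(i)}$); $\phi(\mathbf A)$ has $t$-th domain $\phi_t(\mathbf A)$ and $(w_1,\dots,w_k)\in R^{\phi(\mathbf A)}$ iff the concatenation of the $w_i$ is in $\phi_R(\mathbf A)$. Union gadgets and Datalog$^\cup$ reductions. A union gadget $\upsilon=(d,r)$ from $\Pi$ to $\Sigma$ consists of maps $d$ ($\Pi$-types to $\Sigma$-types) and $r$ ($\Pi$-symbols to $\Sigma$-symbols) with $\mathrm{ar}_{r(R)}=d\circ\mathrm{ar}_R$; $\upsilon(\mathbf A)$ has $t$-th domain the disjoint union of the $A_s$ with $d(s)=t$, and $S^{\upsilon(\mathbf A)}=\bigcup_{r(R)=S}R^{\mathbf A}$. A Datalog$^\cup$ reduction is a composition $\upsilon\circ\phi$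 of a Datalog interpretation followed by a union gadget. *)

(* Defs.v *)
From mathcomp Require Import all_boot.
From Stdlib Require Import Relations.
From Stdlib Require List.
Set Implicit Arguments. Unset Strict Implicit. Unset Printing Implicit Defensive.

Record signature := Signature {
  sty : finType;
  ssym : finType;
  sar : ssym -> seq sty }.

Definition ar_at (S : signature) (R : ssym S) (i : 'I_(size (sar R))) : sty S :=
  tnth (in_tuple (sar R)) i.
Arguments ar_at {S} R i.

(* A structure: one carrier with a typing function (the carrier of type t is
   {x | tyof x = t}, so the carrier is the disjoint union of the A_t), and
   relations given as predicates on lists of elements. *)
Record structure (S : signature) := MkStr {
  carrier :> Type;
  tyof : carrier -> sty S;
  rel : ssym S -> seq carrier -> Prop }.
Arguments tyof {S} A _ : rename.
Arguments rel {S} A _ _ : rename.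
Arguments carrier {S} A : rename.

Definition wt_structure S (A : structure S) : Prop :=
  forall R l, rel A R l -> map (tyof A) l = sar R.

Definition finite_structure S (A : structure S) : Prop :=
  exists l : list A, forall x : A, List.In x l.

Definition is_hom S (A B : structure S) (f : A -> B) : Prop :=
  (forall x, tyof B (f x) = tyof A x) /\
  (forall R l, rel A R l -> rel B R (map f l)).

Definition hom_equiv S (A B : structure S) : Prop :=
  (exists f : A -> B, is_hom f) /\ (exists g : B -> A, is_hom g).

Record gadget (P S : signature) := Gadget {
  gD : sty P -> structure S;
  gR : ssym P -> structure S;
  gp : forall (R : ssym P) (i : 'I_(size (sar R))), gD (ar_at R i) -> gR R }.

Definition wf_gadget P S (g : gadget P S) : Prop :=
  (forall t, wt_structure (gD g t) /\ finite_structure (gD g t)) /\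
  (forall R, wt_structure (gR g R) /\ finite_structure (gR g R)) /\
  (forall R i, is_hom (@gp P S g R i)).

Section GadgetReplacement.
Variables (P S : signature) (g : gadget P S) (A : structure P).

(* elements (a;d) of the copy of D_t for a in A_t, and (a;e) of the copy of
   R^gamma for a in R^A *)
Inductive gpre : Type :=
| PD (t : sty P) (a : A) (d : gD g t)
| PR (R : ssym P) (a : seq A) (e : gR g R).

Definition gvalid (p : gpre) : Prop :=
  match p with
  | PD t a _ => tyof A a = t
  | PR R a _ => rel A R a
  end.

Definition pty (p : gpre) : sty S :=
  match p with
  | PD t _ d => tyof (gD g t) d
  | PR R _ e => tyof (gR g R) e
  end.

(* identify (a; p_{R,i}(e)) with (a_i; e) *)
Definition gident (p q : gpre) : Prop :=
  exists (R : ssym P) (a : seq A) (i : 'I_(size (sar R)))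
         (e : gD g (ar_at R i)) (x0 : A),
    rel A R a /\ p = @PR R a (@gp P S g R i e) /\ q = @PD (ar_at R i) (nth x0 a i) e.

Definition geqv : gpre -> gpre -> Prop := clos_refl_sym_trans gpre gident.

Definition gcls (p : gpre) : sty S * (gpre -> Prop) := (pty p, geqv p).

(* carrier: equivalence classes (tagged with their type) of valid elements *)
Definition gcarrier : Type :=
  {x : sty S * (gpre -> Prop) | exists p, gvalid p /\ gcls p = x}.

Definition gcopy_rel (Q : ssym S) (ps : seq gpre) : Prop :=
  (exists (t : sty P) (a : A) (ds : seq (gD g t)),
      tyof A a = t /\ rel (gD g t) Q ds /\ ps = map (@PD t a) ds) \/
  (exists (R : ssym P) (a : seq A) (es : seq (gR g R)),
      rel A R a /\ rel (gR g R) Q es /\ ps = map (@PR R a) es).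

Definition gadget_apply : structure S :=
  @MkStr S gcarrier (fun x : gcarrier => (proj1_sig x).1)
    (fun Q cs => exists ps, gcopy_rel Q ps /\ map gcls ps = map (@proj1_sig _ _) cs).

End GadgetReplacement.

Record rule (P : signature) (I : finType) := Rule {
  nv : nat;
  vty : 'I_nv -> sty P;
  hsym : I;
  hargs : seq 'I_nv;
  bedb : seq (ssym P * seq 'I_nv);
  bidb : seq (I * seq 'I_nv);
  beq : seq ('I_nv * 'I_nv) }.

Record program (P : signature) := Program {
  idb : finType;
  idb_ar : idb -> seq (sty P);
  rules : seq (rule P idb);
  pout : idb }.
Arguments idb_ar {P} pr _ : rename.
Arguments rules {P} pr : rename.
Arguments pout {P} pr : rename.

Definition out_ar P (pr : program P) : seq (sty P) := idb_ar pr (pout pr).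

Definition wf_rule P (I : finType) (iar : I -> seq (sty P)) (r : rule P I) : Prop :=
  map (@vty _ _ r) (hargs r) = iar (hsym r) /\
  (forall a, List.In a (bedb r) -> map (@vty _ _ r) a.2 = sar a.1) /\
  (forall a, List.In a (bidb r) -> map (@vty _ _ r) a.2 = iar a.1) /\
  (forall a, List.In a (beq r) -> vty a.1 = vty a.2).

Definition wf_program P (pr : program P) : Prop :=
  forall r, List.In r (rules pr) -> wf_rule (idb_ar pr) r.

Inductive derives P (pr : program P) (A : structure P) : idb pr -> seq A -> Prop :=
| Der (r : rule P (idb pr)) (v : 'I_(nv r) -> A) :
    List.In r (rules pr) ->
    (forall x, tyof A (v x) = vty x) ->
    (forall a, List.In a (bedb r) -> rel A a.1 (map v a.2)) ->
    (forall a, List.In a (bidb r) -> @derives P pr A a.1 (map v a.2)) ->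
    (forall a, List.In a (beq r) -> v a.1 = v a.2) ->
    @derives P pr A (hsym r) (map v (hargs r)).
Arguments derives {P} pr A _ _.

Definition dl_out P (pr : program P) (A : structure P) (w : seq A) : Prop :=
  derives pr A (pout pr) w.
Arguments dl_out {P} pr A w.

Record dl_interp (P S : signature) := DLInterp {
  iT : sty S -> program P;
  iR : ssym S -> program P }.

Definition wf_interp P S (phi : dl_interp P S) : Prop :=
  (forall t, wf_program (iT phi t)) /\
  (forall R, wf_program (iR phi R)) /\
  (forall R, out_ar (iR phi R) = flatten (map (fun t => out_ar (iT phi t)) (sar R))).

Definition interp_apply P S (phi : dl_interp P S) (A : structure P) : structure S :=
  @MkStr S {p : sty S * seq A | dl_out (iT phi p.1) A p.2}
    (fun x => (proj1_sig x).1)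
    (fun R ws => map (fun x => (proj1_sig x).1) ws = sar R /\
                 dl_out (iR phi R) A (flatten (map (fun x => (proj1_sig x).2) ws))).

Record ugadget (S0 S : signature) := UGadget {
  ud : sty S0 -> sty S;
  ur : ssym S0 -> ssym S }.

Definition wf_ugadget S0 S (u : ugadget S0 S) : Prop :=
  forall R, sar (ur u R) = map (ud u) (sar R).

Definition ug_apply S0 S (u : ugadget S0 S) (A : structure S0) : structure S :=
  @MkStr S A (fun x => ud u (tyof A x))
    (fun Q l => exists R, ur u R = Q /\ rel A R l).

Record dlu (P S : signature) := DLU {
  dmid : signature;
  dphi : dl_interp P dmid;
  dups : ugadget dmid S }.

Definition wf_dlu P S (psi : dlu P S) : Prop :=
  wf_interp (dphi psi) /\ wf_ugadget (dups psi).

Definition dlu_apply P S (psi : dlu P S) (A : structure P) : structure S :=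
  ug_apply (dups psi) (interp_apply (dphi psi) A).

(* Main.v *)
Require Import Defs.
From mathcomp Require Import all_boot.
From Stdlib Require Import Relations ClassicalEpsilon FunctionalExtensionality PropExtensionality.
Set Implicit Arguments. Unset Strict Implicit. Unset Printing Implicit Defensive.

Lemma In_cat (T : Type) (x : T) s1 s2 : List.In x (s1 ++ s2) <-> List.In x s1 \/ List.In x s2.
Proof.
elim: s1 => [|y s IH] /=; first by split; [right|case].
rewrite IH; tauto.
Qed.

Lemma In_map (T U : Type) (f : T -> U) y s :
  List.In y (map f s) <-> exists x, List.In x s /\ y = f x.
Proof.
elim: s => [|x s IH] /=; first by split => // [[x []]].
split.
- case=> [Hx|Hy]; first by exists x; auto.
  move/IH: Hy => [z [Hz Hy]]; by exists z; auto.
- case=> z [[<-|Hz] Hy]; [by left | right; apply/IH; by exists z].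
Qed.

Lemma In_flatten (T : Type) (x : T) ss :
  List.In x (flatten ss) <-> exists s, List.In s ss /\ List.In x s.
Proof.
elim: ss => [|s ss IH] /=; first by split => // [[s []]].
rewrite In_cat IH; split.
- case=> [H|[s' [H1 H2]]]; [exists s; auto| exists s'; auto].
- case=> s' [[<-|H1] H2]; [by left | right; exists s'; auto].
Qed.

Lemma In_mem (T : eqType) (x : T) s : x \in s -> List.In x s.
Proof.
elim: s => [|y s IH] //=; rewrite in_cons => /orP [/eqP ->|/IH]; auto.
Qed.

Lemma In_enum (T : finType) (x : T) : List.In x (enum T).
Proof. by apply: In_mem; rewrite mem_enum. Qed.

Lemma In_tnth (T : Type) (l : seq T) x :
  List.In x l -> exists i : 'I_(size l), tnth (in_tuple l) i = x.
Proof.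
elim: l => [|a l IH] //= [<-|/IH [i Hi]].
- by exists ord0; rewrite (tnth_nth a).
- exists (lift ord0 i); rewrite (tnth_nth a) /= /bump /=.
  by rewrite -Hi (tnth_nth a).
Qed.

Lemma cat_split (T : Type) (s1 s2 t1 t2 : seq T) :
  size s1 = size s2 -> s1 ++ t1 = s2 ++ t2 -> s1 = s2 /\ t1 = t2.
Proof.
move=> Hs H; split.
- by have := congr1 (take (size s1)) H; rewrite !take_size_cat.
- by have := congr1 (drop (size s1)) H; rewrite !drop_size_cat.
Qed.

Definition E n := enum 'I_n.
Definition blk n o l := take l (drop o (E n)).

Lemma map_blk (T : Type) n (v : 'I_n -> T) o l :
  map v (blk n o l) = take l (drop o (map v (E n))).
Proof. by rewrite /blk map_take map_drop. Qed.

Lemma size_E n : size (E n) = n.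
Proof. exact: size_enum_ord. Qed.

Lemma map_tnthE (T : Type) (ts : seq T) :
  map (tnth (in_tuple ts)) (E (size ts)) = ts.
Proof. by rewrite /E map_tnth_enum. Qed.

Lemma ord0_false (i : 'I_0) : False. Proof. by case: i. Qed.

Lemma exists_v (T U : Type) (ty : T -> U) (ts : seq U) (vals : seq T) :
  map ty vals = ts ->
  exists v : 'I_(size ts) -> T,
    (forall x, ty (v x) = tnth (in_tuple ts) x) /\ map v (E (size ts)) = vals.
Proof.
case: vals => [|x0 vals] Hm.
- subst ts => /=; exists (fun i => False_rect _ (ord0_false i)); split => [i|]; [case: (ord0_false i) | by rewrite /E enum_ord0].
- set vl := x0 :: vals in Hm *.
  subst ts; exists (fun i => nth x0 vl i); split.
  + move=> x; have -> : tnth (in_tuple (map ty vl)) x = nth (ty x0) (map ty vl) x by rewrite (tnth_nth (ty x0)).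
    rewrite (nth_map x0) //.
    by rewrite -(size_map ty).
  + have mE : forall n (f : nat -> T), map (fun i : 'I_n => f i) (E n) = mkseq f n.
      by move=> n f; rewrite /mkseq -val_enum_ord -map_comp.
    by rewrite mE size_map mkseq_nth.
Qed.

Lemma take1_drop (T : Type) (x0 : T) s j :
  j < size s -> take 1 (drop j s) = [:: nth x0 s j].
Proof. by move=> Hj; rewrite (drop_nth x0 Hj) /= take0. Qed.

Lemma blockK (T : Type) (xs : seq (seq T)) sz (j : nat) :
  map size xs = sz -> j < size xs ->
  take (nth 0 sz j) (drop (sumn (take j sz)) (flatten xs)) = nth [::] xs j.
Proof.
move=> <-; elim: xs j => [|x xs IH] [|j] //= Hj.
- by rewrite drop0 take_size_cat.
- rewrite drop_cat ltnNge leq_addr /= addKn; exact: IH.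
Qed.

Lemma fchoice (I X : Type) (Q : I -> X -> Prop) :
  (forall i, exists x, Q i x) -> exists f : I -> X, forall i, Q i (f i).
Proof.
move=> H; exists (fun i => proj1_sig (constructive_indefinite_description _ (H i))).
by move=> i; case: constructive_indefinite_description.
Qed.

Lemma map_nth_eq (X Y Z : Type) (f : X -> Z) (g : Y -> Z) s1 s2 j x1 x2 :
  map f s1 = map g s2 -> j < size s1 -> f (nth x1 s1 j) = g (nth x2 s2 j).
Proof.
move=> H Hj.
have Hs : size s1 = size s2 by rewrite -(size_map f) H size_map.
have := congr1 (fun s => nth (f x1) s j) H; rewrite /= (nth_map x1) // => ->.
by rewrite (set_nth_default (g x2)) ?size_map -?Hs // (nth_map x2) // -Hs.
Qed.

Lemma map_enum_eq (Y Z : Type) k (F : 'I_k -> Z) (G : Y -> Z) (xs : seq Y) :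
  size xs = k -> (forall (j : 'I_k) y0, F j = G (nth y0 xs j)) -> map F (E k) = map G xs.
Proof.
case: xs => [|y0 xs] Hs H.
- by subst k; rewrite /E enum_ord0.
- have mE : forall (f : nat -> Z), map (fun i : 'I_k => f i) (E k) = mkseq f k.
    by move=> f; rewrite /mkseq -val_enum_ord -map_comp.
  rewrite (eq_map (fun j => H j y0)) (mE (fun n => G (nth y0 (y0 :: xs) n))).
  by rewrite -{2}(mkseq_nth y0 (y0 :: xs)) Hs /mkseq -map_comp.
Qed.

Lemma ex_def (T : Type) (s : seq T) (j : nat) : j < size s -> exists x : T, True.
Proof. by case: s => // x. Qed.

Definition pbool (Q : Prop) : bool := if excluded_middle_informative Q then true else false.
Lemma pboolP (Q : Prop) : pbool Q = true <-> Q.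
Proof. rewrite /pbool; case: excluded_middle_informative => //. Qed.

Section Constr.
Variables (P S : signature) (g : gadget P S).
Variable lD : forall t : sty P, seq (gD g t).
Variable lR : forall R : ssym P, seq (gR g R).
Hypothesis lD_all : forall t (d : gD g t), List.In d (lD t).
Hypothesis lR_all : forall R (e : gR g R), List.In e (lR R).

Definition elD t (i : 'I_(size (lD t))) : gD g t := tnth (in_tuple (lD t)) i.
Definition elR R (i : 'I_(size (lR R))) : gR g R := tnth (in_tuple (lR R)) i.
Definition idxD t (d : gD g t) : 'I_(size (lD t)) :=
  proj1_sig (constructive_indefinite_description _ (In_tnth (lD_all d))).
Definition idxR R (e : gR g R) : 'I_(size (lR R)) :=
  proj1_sig (constructive_indefinite_description _ (In_tnth (lR_all e))).
Lemma elD_idx t (d : gD g t) : elD (idxD d) = d.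
Proof. rewrite /idxD; case: constructive_indefinite_description => //. Qed.
Lemma elR_idx R (e : gR g R) : elR (idxR e) = e.
Proof. rewrite /idxR; case: constructive_indefinite_description => //. Qed.

Notation TD := {t : sty P & 'I_(size (lD t))}.
Notation TR := {R : ssym P & 'I_(size (lR R))}.
Notation midty := (TD + TR)%type.

Definition sD t (d : gD g t) : midty := inl (Tagged (fun t => 'I_(size (lD t))) (idxD d)).
Definition sR R (e : gR g R) : midty := inr (Tagged (fun R => 'I_(size (lR R))) (idxR e)).

Definition ar (m : midty) : seq (sty P) :=
  match m with inl x => [:: tag x] | inr x => sar (tag x) end.
Definition ud (m : midty) : sty S :=
  match m with
  | inl x => tyof (gD g (tag x)) (elD (tagged x))
  | inr x => tyof (gR g (tag x)) (elR (tagged x)) end.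

Notation msym := {Q : ssym S & {w : (size (sar Q)).-tuple midty | map ud w == sar Q}}.
Definition wr (r : msym) : (size (sar (tag r))).-tuple midty := proj1_sig (tagged r).
Definition msar (r : msym) : seq midty := wr r.

Definition mid : signature := @Signature midty msym msar.

Notation idbT := ((midty + (midty * midty)) + msym)%type.
Definition IV (m : midty) : idbT := inl (inl m).
Definition IE (m1 m2 : midty) : idbT := inl (inr (m1, m2)).
Definition IO (r : msym) : idbT := inr r.

Definition iar (I : idbT) : seq (sty P) :=
  match I with
  | inl (inl m) => ar m
  | inl (inr (m1, m2)) => ar m1 ++ ar m2
  | inr r => flatten (map ar (msar r)) end.

Definition mkR (ts : seq (sty P)) (h : idbT) (hp : seq 'I_(size ts))
  (be : seq (ssym P * seq 'I_(size ts))) (bi : seq (idbT * seq 'I_(size ts))) : rule P idbT :=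
  @Rule P idbT (size ts) (fun i => tnth (in_tuple ts) i) h hp be bi [::].
Arguments mkR : clear implicits.

Definition R1 (x : TD) : rule P idbT :=
  mkR [:: tag x] (IV (sD (elD (tagged x)))) (E 1) [::] [::].
Definition R2 (x : TR) : rule P idbT :=
  mkR (sar (tag x)) (IV (sR (elR (tagged x)))) (E _) [:: (tag x, E _)] [::].
Definition R3 (m : midty) : rule P idbT :=
  mkR (ar m) (IE m m) (E _ ++ E _) [::] [:: (IV m, E _)].

Notation T4 := {R : ssym P & {j : 'I_(size (sar R)) & 'I_(size (lD (ar_at R j)))}}.

Definition R4a (x : T4) (m : midty) : rule P idbT :=
  let R := tag x in let j := tag (tagged x) in let d := elD (tagged (tagged x)) in
  let ts := sar R ++ ar m in
  mkR ts (IE (sR (@gp P S g R j d)) m) (E (size ts))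
      [:: (R, blk (size ts) 0 (size (sar R)))]
      [:: (IE (sD d) m, blk (size ts) j 1 ++ blk (size ts) (size (sar R)) (size (ar m)))].
Definition R4b (x : T4) (m : midty) : rule P idbT :=
  let R := tag x in let j := tag (tagged x) in let d := elD (tagged (tagged x)) in
  let ts := sar R ++ ar m in
  mkR ts (IE (sD d) m) (blk (size ts) j 1 ++ blk (size ts) (size (sar R)) (size (ar m)))
      [:: (R, blk (size ts) 0 (size (sar R)))]
      [:: (IE (sR (@gp P S g R j d)) m, E (size ts))].

Definition szs (r : msym) : seq nat := map (fun m => size (ar m)) (msar r).
Definition off (r : msym) (j : nat) := sumn (take j (szs r)).
Definition len (r : msym) (j : nat) := nth 0 (szs r) j.

Definition R5D (r : msym) (t : sty P) (cs : (size (sar (tag r))).-tuple 'I_(size (lD t))) :=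
  let ts := t :: flatten (map ar (msar r)) in
  mkR ts (IO r) (drop 1 (E (size ts))) [::]
    (map (fun j : 'I_(size (sar (tag r))) =>
       (IE (sD (elD (tnth cs j))) (tnth (wr r) j),
        blk (size ts) 0 1 ++ blk (size ts) (1 + off r j) (len r j))) (E _)).
Definition R5R (r : msym) (R : ssym P) (cs : (size (sar (tag r))).-tuple 'I_(size (lR R))) :=
  let ts := sar R ++ flatten (map ar (msar r)) in
  mkR ts (IO r) (drop (size (sar R)) (E (size ts))) [:: (R, blk (size ts) 0 (size (sar R)))]
    (map (fun j : 'I_(size (sar (tag r))) =>
       (IE (sR (elR (tnth cs j))) (tnth (wr r) j),
        blk (size ts) 0 (size (sar R)) ++ blk (size ts) (size (sar R) + off r j) (len r j))) (E _)).

Arguments R5D : clear implicits.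
Arguments R5R : clear implicits.
Definition rules5 (r : msym) : seq (rule P idbT) :=
  flatten (map (fun t => flatten (map (fun cs : (size (sar (tag r))).-tuple 'I_(size (lD t)) =>
       if pbool (Defs.rel (gD g t) (tag r) (map (@elD t) (tval cs)))
       then [:: R5D r t cs] else [::]) (enum {: (size (sar (tag r))).-tuple 'I_(size (lD t))}))) (enum {: sty P}))
  ++ flatten (map (fun R => flatten (map (fun cs : (size (sar (tag r))).-tuple 'I_(size (lR R)) =>
       if pbool (Defs.rel (gR g R) (tag r) (map (@elR R) (tval cs)))
       then [:: R5R r R cs] else [::]) (enum {: (size (sar (tag r))).-tuple 'I_(size (lR R))}))) (enum {: ssym P})).

Definition allrules : seq (rule P idbT) :=
  map R1 (enum {: TD}) ++ map R2 (enum {: TR}) ++ map R3 (enum {: midty})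
  ++ flatten (map (fun xm : T4 * midty => [:: R4a xm.1 xm.2; R4b xm.1 xm.2]) (enum {: T4 * midty}))
  ++ flatten (map rules5 (enum {: msym})).

Definition prog (o : idbT) : program P := @Program P idbT iar allrules o.

Definition phi : dl_interp P mid := @DLInterp P mid (fun m => prog (IV m)) (fun r => prog (IO r)).
Definition ug : ugadget mid S := @UGadget mid S ud (fun r => tag r).
Definition psi : dlu P S := @DLU P S mid phi ug.

Lemma mapv_E (ts : seq (sty P)) : map (tnth (in_tuple ts)) (E (size ts)) = ts.
Proof. exact: map_tnthE. Qed.
Lemma mapv_blk (ts : seq (sty P)) o l : map (tnth (in_tuple ts)) (blk (size ts) o l) = take l (drop o ts).
Proof. by rewrite map_blk mapv_E. Qed.

Lemma mapv_E1 (t : sty P) L : map (tnth (in_tuple (t :: L))) (E (size L).+1) = t :: L.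
Proof. exact: (mapv_E (t :: L)). Qed.
Lemma mapv_blk1 (t : sty P) L o l :
  map (tnth (in_tuple (t :: L))) (blk (size L).+1 o l) = take l (drop o (t :: L)).
Proof. exact: (mapv_blk (t :: L)). Qed.

Lemma allrulesP r : List.In r allrules ->
  (exists x, r = R1 x) \/ (exists x, r = R2 x) \/ (exists m, r = R3 m) \/
  (exists x m, r = R4a x m \/ r = R4b x m) \/
  (exists rr t cs, Defs.rel (gD g t) (tag rr) (map (@elD t) (tval cs)) /\ r = R5D rr t cs) \/
  (exists rr R cs, Defs.rel (gR g R) (tag rr) (map (@elR R) (tval cs)) /\ r = R5R rr R cs).
Proof.
rewrite /allrules !In_cat !In_map !In_flatten.
case=> [[x [_ ->]]|[[x [_ ->]]|[[x [_ ->]]|[[s [/In_map [[x m] [_ ->]] /= Hs]]|]]]].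
- by left; exists x.
- by right; left; exists x.
- by right; right; left; exists x.
- right; right; right; left; exists x, m; case: Hs => [->|[->|[]]]; auto.
- case=> s [/In_map [rr [_ ->]]]; rewrite /rules5 In_cat !In_flatten.
  case=> [[s' [/In_map [t [_ ->]] /In_flatten [s'' [/In_map [cs [_ ->]] Hs]]]]|
          [s' [/In_map [R [_ ->]] /In_flatten [s'' [/In_map [cs [_ ->]] Hs]]]]].
  + right; right; right; right; left; exists rr, t, cs.
    move: Hs; case E1: pbool; last by case.
    case=> [<-|[]]; split => //; exact/pboolP.
  + right; right; right; right; right; exists rr, R, cs.
    move: Hs; case E1: pbool; last by case.
    case=> [<-|[]]; split => //; exact/pboolP.
Qed.

Lemma szs_map (rr : msym) : map size (map ar (msar rr)) = szs rr.
Proof. by rewrite /szs -map_comp. Qed.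

Lemma block_ar (rr : msym) (j : 'I_(size (sar (tag rr)))) :
  take (len rr j) (drop (off rr j) (flatten (map ar (msar rr)))) = ar (tnth (wr rr) j).
Proof.
rewrite /len /off (blockK (szs_map rr)); last by rewrite size_map /msar size_tuple.
by rewrite (nth_map (tnth (wr rr) j)) /msar ?size_tuple // -tnth_nth.
Qed.

Lemma nth_ar_at (R : ssym P) (j : 'I_(size (sar R))) d0 : nth d0 (sar R) j = ar_at R j.
Proof. by rewrite /ar_at (tnth_nth d0). Qed.

Ltac sp4 := split; [|split; [|split]].

Lemma wf_rules : forall r, List.In r allrules -> wf_rule iar r.
Proof.
move=> r /allrulesP.
case=> [[x ->]|[[x ->]|[[m ->]|[[x [m [->|->]]]|[[rr [t [cs [_ ->]]]]|[rr [R [cs [_ ->]]]]]]]]];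
  rewrite /wf_rule /=; sp4; try by move=> a [].
- by rewrite (mapv_E [:: tag x]).
- by rewrite mapv_E.
- by move=> a [<-|[]]; rewrite /= mapv_E.
- by rewrite map_cat mapv_E.
- by move=> a [<-|[]]; rewrite /= mapv_E.
- by rewrite mapv_E.
- by move=> a [<-|[]]; rewrite /= mapv_blk drop0 take_size_cat.
- move=> a [<-|[]]; rewrite /= map_cat !mapv_blk (take1_drop (ar_at (tag x) (tag (tagged x)))); last by rewrite size_cat ltn_addr.
  rewrite drop_size_cat // take_size nth_cat ltn_ord.
  by rewrite nth_ar_at.
- rewrite map_cat !mapv_blk (take1_drop (ar_at (tag x) (tag (tagged x)))); last by rewrite size_cat ltn_addr.
  by rewrite drop_size_cat // take_size nth_cat ltn_ord nth_ar_at.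
- by move=> a [<-|[]]; rewrite /= mapv_blk drop0 take_size_cat.
- by move=> a [<-|[]]; rewrite /= mapv_E.
- by rewrite map_drop mapv_E1 drop1.
- move=> a /In_map [j [_ ->]] /=; rewrite map_cat !mapv_blk1 add1n /= take0.
  by rewrite block_ar.
- by rewrite map_drop mapv_E drop_size_cat.
- by move=> a [<-|[]]; rewrite /= mapv_blk drop0 take_size_cat.
- move=> a /In_map [j [_ ->]] /=; rewrite map_cat !mapv_blk drop0 take_size_cat //.
  by rewrite drop_cat ltnNge leq_addr /= addKn block_ar.
Qed.

Hypothesis gp_hom : forall R i, is_hom (@gp P S g R i).
Hypothesis gD_wt : forall t, wt_structure (gD g t).
Hypothesis gR_wt : forall R, wt_structure (gR g R).

Section OnA.
Variable A : structure P.
Hypothesis HA : wt_structure A.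

Notation gpre := (gpre g A).

Definition shape (p : gpre) : midty :=
  match p with @PD _ _ _ _ t a d => sD d | @PR _ _ _ _ R a e => sR e end.
Definition tup (p : gpre) : seq A :=
  match p with @PD _ _ _ _ t a d => [:: a] | @PR _ _ _ _ R a e => a end.
Definition dec (m : midty) (w : seq A) : option gpre :=
  match m with
  | inl x => if w is [:: a] then Some (@PD _ _ g A (tag x) a (elD (tagged x))) else None
  | inr x => Some (@PR _ _ g A (tag x) w (elR (tagged x))) end.

Lemma decK (p : gpre) : dec (shape p) (tup p) = Some p.
Proof. by case: p => [t a d|R a e] /=; rewrite ?elD_idx ?elR_idx. Qed.

Lemma shape_tup_inj (p q : gpre) : shape p = shape q -> tup p = tup q -> p = q.
Proof. by move=> H1 H2; have := decK p; rewrite H1 H2 decK => -[]. Qed.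

Lemma ty_tup (p : gpre) : gvalid p -> map (tyof A) (tup p) = ar (shape p).
Proof. case: p => [t a d|R a e] /=; [by move->|exact: HA]. Qed.

Lemma size_tup (p : gpre) : gvalid p -> size (tup p) = size (ar (shape p)).
Proof. by move/ty_tup <-; rewrite size_map. Qed.

Lemma pty_ud (p : gpre) : pty p = ud (shape p).
Proof. by case: p => [t a d|R a e] /=; rewrite ?elD_idx ?elR_idx. Qed.

Lemma gident_valid (p q : gpre) : gident p q -> gvalid p /\ gvalid q.
Proof.
case=> R [a [i [e [x0 [Hr [-> ->]]]]]]; split => //=.
have := HA Hr => Hm.
rewrite -(nth_map x0 (tyof A x0)); last by rewrite -(size_map (tyof A)) Hm.
by rewrite Hm nth_ar_at.
Qed.

Lemma gident_pty (p q : gpre) : gident p q -> pty p = pty q.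
Proof. by case=> R [a [i [e [x0 [Hr [-> ->]]]]]] /=; rewrite (proj1 (@gp_hom R i)). Qed.

Lemma geqv_pty (p q : gpre) : geqv p q -> pty p = pty q.
Proof.
elim => [x y /gident_pty|x|x y _ ->|x y z _ -> _ ->] //.
Qed.

Lemma geqv_sym (p q : gpre) : geqv p q -> geqv q p.
Proof. exact: rst_sym. Qed.
Lemma geqv_trans (p q r : gpre) : geqv p q -> geqv q r -> geqv p r.
Proof. exact: rst_trans. Qed.
Lemma geqv_refl (p : gpre) : geqv p p.
Proof. exact: rst_refl. Qed.

Lemma gcls_eq (p q : gpre) : geqv p q -> gcls p = gcls q.
Proof.
move=> H; rewrite /gcls (geqv_pty H); congr pair.
apply: functional_extensionality => x; apply: propositional_extensionality; split.
- by move/(geqv_trans (geqv_sym H)).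
- by move/(geqv_trans H).
Qed.

Lemma gcls_geqv (p q : gpre) : gcls p = gcls q -> geqv p q.
Proof. by case=> _ H; rewrite H; apply: geqv_refl. Qed.




Definition Inv (I : idbT) (w : seq A) : Prop :=
  match I with
  | inl (inl m) => exists p : gpre, gvalid p /\ shape p = m /\ tup p = w
  | inl (inr (m1, m2)) => exists p1 p2 : gpre, gvalid p1 /\ gvalid p2 /\ geqv p1 p2 /\
        shape p1 = m1 /\ shape p2 = m2 /\ w = tup p1 ++ tup p2
  | inr r => exists qf pf : 'I_(size (sar (tag r))) -> gpre,
        gcopy_rel (tag r) (map qf (E _)) /\
        forall j, gvalid (pf j) /\ geqv (qf j) (pf j) /\ shape (pf j) = tnth (wr r) j /\
                  tup (pf j) = take (len r j) (drop (off r j) w)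
  end.

Lemma E1 : E 1 = [:: ord0].
Proof. by apply: (inj_map val_inj); rewrite /E val_enum_ord. Qed.

Lemma size_vals (ts : seq (sty P)) (v : 'I_(size ts) -> A) : size (map v (E (size ts))) = size ts.
Proof. by rewrite size_map size_E. Qed.

Lemma ty_vals (ts : seq (sty P)) (v : 'I_(size ts) -> A) :
  (forall x, tyof A (v x) = tnth (in_tuple ts) x) -> map (tyof A) (map v (E (size ts))) = ts.
Proof. by move=> H; rewrite -map_comp (eq_map H) mapv_E. Qed.

Lemma nth0E (T : Type) n (v : 'I_n.+1 -> T) x : nth x (map v (E n.+1)) 0 = v ord0.
Proof. rewrite (nth_map ord0) ?size_E //; congr v; exact: (nth_ord_enum ord0 ord0). Qed.

Lemma sound o I w : derives (prog o) A I w -> Inv I w.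
Proof.
elim=> r v Hin Hty Hedb Hidb IH Heq {Hidb Heq}.
move: Hin => /allrulesP.
case=> [[x Er]|[[x Er]|[[m Er]|[[x [m [Er|Er]]]|[[rr [t [cs [Hrel Er]]]]|[rr [R [cs [Hrel Er]]]]]]]]];
  subst r; move: (ty_vals Hty) (size_vals v) => Hts Hsz.
- exists (@PD _ _ g A (tag x) (v ord0) (elD (tagged x))); split => //=.
  by rewrite E1.
- exists (@PR _ _ g A (tag x) (map v (E _)) (elR (tagged x))); split => //=.
  by apply: (Hedb (tag x, E _)); left.
- have [p [Hp [Hs Ht]]] := IH (IV m, E _) (or_introl erefl).
  by exists p, p; rewrite /= map_cat -Ht; do !split => //; apply: geqv_refl.
- have Hj : (tag (tagged x) < size (sar (tag x) ++ ar m))%N by rewrite size_cat ltn_addr.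
  pose x0 := v (Ordinal Hj).
  have Hr : Defs.rel A (tag x) (take (size (sar (tag x))) (map v (E _))).
    by have := Hedb _ (or_introl erefl); rewrite /= map_blk drop0.
  have [p1 [p2 [V1 [V2 [E12 [S1 [S2 W]]]]]]] := IH _ (or_introl erefl).
  move: W; rewrite /= map_cat !map_blk (take1_drop x0) ?Hsz //.
  rewrite (take_oversize (n := size (ar m))); last by rewrite size_drop Hsz size_cat addKn.
  move=> W.
  have Hs1 : size (tup p1) = size [:: nth x0 (map v (E _)) (tag (tagged x))] by rewrite size_tup // S1.
  have [T1 T2] := cat_split Hs1 (esym W).
  have Ep1 : p1 = @PD _ _ g A (ar_at (tag x) (tag (tagged x))) (nth x0 (map v (E _)) (tag (tagged x)))
                       (elD (tagged (tagged x))) by apply: shape_tup_inj.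
  exists (@PR _ _ g A (tag x) (take (size (sar (tag x))) (map v (E _))) (gp (elD (tagged (tagged x))))), p2.
  do !split => //=; last by rewrite T2 cat_take_drop.
  apply: rst_trans E12; apply: rst_step.
  exists (tag x), (take (size (sar (tag x))) (map v (E _))), (tag (tagged x)), (elD (tagged (tagged x))), x0.
  by rewrite nth_take.
- have Hj : (tag (tagged x) < size (sar (tag x) ++ ar m))%N by rewrite size_cat ltn_addr.
  pose x0 := v (Ordinal Hj).
  have Hr : Defs.rel A (tag x) (take (size (sar (tag x))) (map v (E _))).
    by have := Hedb _ (or_introl erefl); rewrite /= map_blk drop0.
  have [p1 [p2 [V1 [V2 [E12 [S1 [S2 W]]]]]]] := IH _ (or_introl erefl).
  have Hs1 : size (tup p1) = size (take (size (sar (tag x))) (map v (E (size (sar (tag x) ++ ar m))))).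
    by rewrite size_tup // S1 size_takel // Hsz size_cat leq_addr.
  have [T1 T2] := cat_split Hs1 (etrans (esym W) (esym (cat_take_drop (size (sar (tag x))) _))).
  have Ep1 : p1 = @PR _ _ g A (tag x) (take (size (sar (tag x))) (map v (E _)))
                       (gp (elD (tagged (tagged x)))) by apply: shape_tup_inj.
  have Gi : gident p1 (@PD _ _ g A (ar_at (tag x) (tag (tagged x))) (nth x0 (map v (E _)) (tag (tagged x)))
                       (elD (tagged (tagged x)))).
    exists (tag x), (take (size (sar (tag x))) (map v (E _))), (tag (tagged x)), (elD (tagged (tagged x))), x0.
    by rewrite nth_take.
  exists (@PD _ _ g A (ar_at (tag x) (tag (tagged x))) (nth x0 (map v (E _)) (tag (tagged x)))
                       (elD (tagged (tagged x)))), p2.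
  do !split => //=.
  + exact: (proj2 (gident_valid Gi)).
  + by apply: rst_trans E12; apply: rst_sym; apply: rst_step.
  + rewrite map_cat !map_blk (take1_drop x0) ?Hsz // T2.
    by rewrite (take_oversize (n := size (ar m))) // size_drop Hsz size_cat addKn.
- have Ha : tyof A (v ord0) = t by rewrite Hty.
  have H0 : take 1 (drop 0 (map v (E (size (t :: flatten (map ar (msar rr))))))) = [:: v ord0].
    rewrite (take1_drop (v ord0)); last by rewrite size_map size_E.
    by rewrite nth0E.
  pose qf := fun j : 'I_(size (sar (tag rr))) => @PD _ _ g A t (v ord0) (elD (tnth cs j)).
  have Hj : forall j, exists p2, gvalid p2 /\ geqv (qf j) p2 /\ shape p2 = tnth (wr rr) j /\ tup p2 = take (len rr j) (drop (off rr j) (drop 1 (map v (E (size (t :: flatten (map ar (msar rr)))))))).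
    move=> j.
    have := IH _ (proj2 (In_map _ _ _) (ex_intro _ j (conj (In_enum j) erefl))).
    case=> p1 [p2 [V1 [V2 [E12 [S1 [S2 W]]]]]].
    move: W; rewrite map_cat !map_blk H0 drop_drop addnC => W.
    have Hs1 : size (tup p1) = size [:: v ord0] by rewrite size_tup // S1.
    have [T1 T2] := cat_split Hs1 (esym W).
    have Ep1 : p1 = qf j by apply: shape_tup_inj.
    by exists p2; rewrite -Ep1.
  have [pf Hpf] := fchoice Hj.
  rewrite map_drop.
  exists qf, pf; split; last exact: Hpf.
  left; exists t, (v ord0), (map (@elD t) cs); split => //; split => //.
  by rewrite /qf -[in RHS](map_tnth_enum cs) -!map_comp.
- have Hr : Defs.rel A R (take (size (sar R)) (map v (E (size (sar R ++ flatten (map ar (msar rr))))))).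
    by have := Hedb _ (or_introl erefl); rewrite /= map_blk drop0.
  pose qf := fun j : 'I_(size (sar (tag rr))) =>
    @PR _ _ g A R (take (size (sar R)) (map v (E (size (sar R ++ flatten (map ar (msar rr))))))) (elR (tnth cs j)).
  have Hj : forall j, exists p2, gvalid p2 /\ geqv (qf j) p2 /\ shape p2 = tnth (wr rr) j /\
      tup p2 = take (len rr j) (drop (off rr j) (drop (size (sar R)) (map v (E (size (sar R ++ flatten (map ar (msar rr)))))))).
    move=> j.
    have := IH _ (proj2 (In_map _ _ _) (ex_intro _ j (conj (In_enum j) erefl))).
    case=> p1 [p2 [V1 [V2 [E12 [S1 [S2 W]]]]]].
    move: W; rewrite map_cat !map_blk drop0 drop_drop [(off rr j + _)%N]addnC => W.
    have Hs1 : size (tup p1) = size (take (size (sar R)) (map v (E (size (sar R ++ flatten (map ar (msar rr)))))))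
      by rewrite size_tup // S1 size_takel // Hsz size_cat leq_addr.
    have [T1 T2] := cat_split Hs1 (esym W).
    have Ep1 : p1 = qf j by apply: shape_tup_inj.
    by exists p2; rewrite -Ep1.
  have [pf Hpf] := fchoice Hj.
  rewrite map_drop.
  exists qf, pf; split; last exact: Hpf.
  right; exists R, (take (size (sar R)) (map v (E (size (sar R ++ flatten (map ar (msar rr))))))), (map (@elR R) cs).
  split => //; split => //.
  by rewrite /qf -[in RHS](map_tnth_enum cs) -!map_comp.
Qed.

Lemma derR o r (v : 'I_(nv r) -> A) : List.In r allrules ->
  (forall x, tyof A (v x) = vty x) ->
  (forall a, List.In a (bedb r) -> Defs.rel A a.1 (map v a.2)) ->
  (forall a, List.In a (bidb r) -> derives (prog o) A a.1 (map v a.2)) ->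
  beq r = [::] -> derives (prog o) A (hsym r) (map v (hargs r)).
Proof. by move=> H1 H2 H3 H4 H5; apply: (@Der _ (prog o)) => // a; rewrite H5. Qed.

Lemma In_R1 x : List.In (R1 x) allrules.
Proof. by rewrite /allrules In_cat; left; apply/In_map; exists x; split => //; apply: In_enum. Qed.
Lemma In_R2 x : List.In (R2 x) allrules.
Proof. by rewrite /allrules !In_cat; right; left; apply/In_map; exists x; split => //; apply: In_enum. Qed.
Lemma In_R3 x : List.In (R3 x) allrules.
Proof. by rewrite /allrules !In_cat; right; right; left; apply/In_map; exists x; split => //; apply: In_enum. Qed.
Lemma In_R4a x m : List.In (R4a x m) allrules.
Proof.
rewrite /allrules !In_cat; right; right; right; left; apply/In_flatten.
by exists [:: R4a x m; R4b x m]; split; [apply/In_map; exists (x, m); split => //; apply: In_enum| left].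
Qed.
Lemma In_R4b x m : List.In (R4b x m) allrules.
Proof.
rewrite /allrules !In_cat; right; right; right; left; apply/In_flatten.
by exists [:: R4a x m; R4b x m]; split; [apply/In_map; exists (x, m); split => //; apply: In_enum| right; left].
Qed.
Lemma In_R5D rr t cs : Defs.rel (gD g t) (tag rr) (map (@elD t) (tval cs)) ->
  List.In (R5D rr t cs) allrules.
Proof.
move=> H; rewrite /allrules !In_cat; right; right; right; right; apply/In_flatten.
exists (rules5 rr); split; first by apply/In_map; exists rr; split => //; apply: In_enum.
rewrite /rules5 In_cat; left; apply/In_flatten; eexists; split.
  by apply/In_map; exists t; split; [apply: In_enum|reflexivity].
apply/In_flatten; eexists; split.
  by apply/In_map; exists cs; split; [apply: In_enum|reflexivity].
by move/pboolP: H => ->; left.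
Qed.
Lemma In_R5R rr R cs : Defs.rel (gR g R) (tag rr) (map (@elR R) (tval cs)) ->
  List.In (R5R rr R cs) allrules.
Proof.
move=> H; rewrite /allrules !In_cat; right; right; right; right; apply/In_flatten.
exists (rules5 rr); split; first by apply/In_map; exists rr; split => //; apply: In_enum.
rewrite /rules5 In_cat; right; apply/In_flatten; eexists; split.
  by apply/In_map; exists R; split; [apply: In_enum|reflexivity].
apply/In_flatten; eexists; split.
  by apply/In_map; exists cs; split; [apply: In_enum|reflexivity].
by move/pboolP: H => ->; left.
Qed.

Lemma C_IV o (p : gpre) : gvalid p -> derives (prog o) A (IV (shape p)) (tup p).
Proof.
case: p => [t a d|R a e] /= Hv.
- pose x := Tagged (fun t => 'I_(size (lD t))) (idxD d).
  have := @derR o (R1 x) (fun _ => a) (In_R1 x).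
  rewrite /= E1 elD_idx; apply => //.
  by move=> i; rewrite Hv (tnth_nth t); case: i => [[|]].
- pose x := Tagged (fun R => 'I_(size (lR R))) (idxR e).
  have [v [Hty Hv']] := exists_v (HA Hv).
  have := @derR o (R2 x) v (In_R2 x).
  rewrite /= Hv' elR_idx; apply => // b [<-|[]].
  by rewrite /= Hv'.
Qed.

Lemma C_IE1 o (p q : gpre) : clos_refl_sym_trans_1n gpre (@gident P S g A) p q -> gvalid p ->
  gvalid q /\ derives (prog o) A (IE (shape p) (shape q)) (tup p ++ tup q).
Proof.
elim=> {p q} [p|x y z Hxy Hyz IH] Hx.
- split => //.
  have [v [Hty Hv']] := exists_v (ty_tup Hx).
  have := @derR o (R3 (shape p)) v (In_R3 _).
  rewrite /= map_cat Hv'; apply => // b [<-|[]].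
  by rewrite /= Hv'; apply: C_IV.
- have Hsplit : forall (R : ssym P) (a : seq A) (i : 'I_(size (sar R))) (x0 : A) (zz : gpre),
      Defs.rel A R a -> gvalid zz ->
      exists v : 'I_(size (sar R ++ ar (shape zz))) -> A,
        (forall x, tyof A (v x) = tnth (in_tuple (sar R ++ ar (shape zz))) x) /\
        map v (E (size (sar R ++ ar (shape zz)))) = a ++ tup zz /\
        map v (blk (size (sar R ++ ar (shape zz))) 0 (size (sar R))) = a /\
        map v (blk (size (sar R ++ ar (shape zz))) i 1 ++
               blk (size (sar R ++ ar (shape zz))) (size (sar R)) (size (ar (shape zz)))) =
          [:: nth x0 a i] ++ tup zz.
    move=> R a i x0 zz Hr Vz.
    have Hm := HA Hr.
    have Hsa : size a = size (sar R) by rewrite -Hm size_map.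
    have [v [Hty Hv']] := exists_v (etrans (map_cat _ _ _) (congr2 cat Hm (ty_tup Vz))).
    exists v; split => //; split => //; split.
    * by rewrite map_blk Hv' drop0 (take_size_cat _ Hsa).
    * rewrite map_cat !map_blk Hv' (take1_drop x0); last by rewrite size_cat Hsa ltn_addr.
      rewrite nth_cat Hsa ltn_ord (drop_size_cat _ Hsa) take_oversize //.
      by rewrite size_tup.
  case: Hxy => G.
  + have Vy := proj2 (gident_valid G).
    have [Vz D] := IH Vy; split => //.
    case: G => R [a [i [e [x0 [Hr [Ex Ey]]]]]]; subst x y.
    have [v [Hty [Hv1 [Hv2 Hv3]]]] := Hsplit R a i x0 z Hr Vz.
    pose x4 := Tagged (fun R => {j : 'I_(size (sar R)) & 'I_(size (lD (ar_at R j)))})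
                 (Tagged (fun j => 'I_(size (lD (ar_at R j)))) (idxD e)).
    have := @derR o (R4a x4 (shape z)) v (In_R4a _ _) Hty.
    rewrite /= Hv1 elD_idx; apply => //.
    * by move=> b [<-|[]]; rewrite /= Hv2.
    * by move=> b [<-|[]]; rewrite /= Hv3.
  + have Vy := proj1 (gident_valid G).
    have [Vz D] := IH Vy; split => //.
    case: G => R [a [i [e [x0 [Hr [Ey Ex]]]]]]; subst x y.
    have [v [Hty [Hv1 [Hv2 Hv3]]]] := Hsplit R a i x0 z Hr Vz.
    pose x4 := Tagged (fun R => {j : 'I_(size (sar R)) & 'I_(size (lD (ar_at R j)))})
                 (Tagged (fun j => 'I_(size (lD (ar_at R j)))) (idxD e)).
    have := @derR o (R4b x4 (shape z)) v (In_R4b _ _) Hty.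
    rewrite /= Hv3 elD_idx; apply => //.
    * by move=> b [<-|[]]; rewrite /= Hv2.
    * by move=> b [<-|[]]; rewrite /= Hv1.
Qed.

Lemma C_IE o (p q : gpre) : geqv p q -> gvalid p ->
  derives (prog o) A (IE (shape p) (shape q)) (tup p ++ tup q).
Proof. by move=> H Hp; case: (C_IE1 o (clos_rst_rst1n _ _ _ _ H) Hp). Qed.

Notation GA := (gadget_apply g A).
Notation B := (dlu_apply psi A).

Definition rep (c : GA) : gpre := proj1_sig (constructive_indefinite_description _ (proj2_sig c)).
Lemma repP c : gvalid (rep c) /\ gcls (rep c) = proj1_sig c.
Proof. rewrite /rep; case: constructive_indefinite_description => //. Qed.

Definition f1 (c : GA) : B :=
  exist _ (shape (rep c), tup (rep c)) (C_IV (IV (shape (rep c))) (proj1 (repP c))).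

Lemma rep2_ex (x : B) : exists p : gpre, gvalid p /\ shape p = (proj1_sig x).1 /\ tup p = (proj1_sig x).2.
Proof. exact: (sound (proj2_sig x)). Qed.

Definition rep2 (x : B) : gpre := proj1_sig (constructive_indefinite_description _ (rep2_ex x)).
Lemma rep2P x : gvalid (rep2 x) /\ shape (rep2 x) = (proj1_sig x).1 /\ tup (rep2 x) = (proj1_sig x).2.
Proof. rewrite /rep2; case: constructive_indefinite_description => //. Qed.

Definition f2 (x : B) : GA :=
  exist _ (gcls (rep2 x)) (ex_intro _ (rep2 x) (conj (proj1 (rep2P x)) erefl)).

Lemma hom_f2 : is_hom f2.
Proof.
split.
- move=> x /=; case: (rep2P x) => _ [<- _]; exact: pty_ud.
- move=> Q xs [rr [<- [Hm Hd]]].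
  have [qf [pf [Hc Hpf]]] := sound Hd.
  exists (map qf (E _)); split => //.
  have Hsx : size xs = size (sar (tag rr)) by have := congr1 size Hm; rewrite size_map /= /msar size_tuple.
  rewrite -(map_comp (@gcls _ _ g A) qf) -(map_comp (@proj1_sig _ _) f2); apply: map_enum_eq => //.
  move=> j y0 /=.
  have [V1 [E1' [S1 T1]]] := Hpf j.
  rewrite (gcls_eq E1'); congr gcls.
  have [W1 [W2 W3]] := rep2P (nth y0 xs j).
  have Hj : j < size xs by rewrite Hsx.
  apply: shape_tup_inj.
  - rewrite S1 W2 (tnth_nth (proj1_sig y0).1).
    by have := congr1 (fun s => nth (proj1_sig y0).1 s j) Hm; rewrite /= (nth_map y0) // => ->.
  - rewrite T1 W3.
    have Hsz : map size (map (fun x : B => (proj1_sig x).2) xs) = szs rr.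
      rewrite /szs (_ : msar rr = map (fun x : B => (proj1_sig x).1) xs); last by rewrite Hm.
      rewrite -!map_comp; apply: eq_map => x /=.
      by case: (rep2P x) => V [<- <-]; rewrite size_tup.
    rewrite /len /off (blockK Hsz) ?size_map //.
    by rewrite (nth_map y0).
Qed.

Lemma copy_pty Q (ps : seq gpre) : gcopy_rel Q ps -> map (@pty P S g A) ps = sar Q.
Proof.
case=> [[t [a [ds [_ [Hr ->]]]]]|[R [a [es [_ [Hr ->]]]]]]; rewrite -map_comp.
- exact: (gD_wt Hr).
- exact: (gR_wt Hr).
Qed.

Lemma rep_valid c : gvalid (rep c).
Proof. exact: (proj1 (repP c)). Qed.

Lemma hom_f1 : is_hom f1.
Proof.
split.
- by move=> c /=; rewrite -pty_ud; case: (repP c) => _ <-.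
- move=> Q cs [ps [Hc Hm]].
  have Hpty := copy_pty Hc.
  have Hsps : size ps = size cs by rewrite -(size_map (@gcls P S g A)) Hm size_map.
  have Hscs : size cs = size (sar Q) by rewrite -Hsps -Hpty size_map.
  have Hsz : size (map shape (map rep cs)) == size (sar Q) by rewrite !size_map Hscs.
  pose w := Tuple Hsz.
  have Hw : map ud w == sar Q.
    apply/eqP; rewrite /= -Hpty.
    have -> : map (@pty P S g A) ps = map (fun x => x.1) (map (@gcls P S g A) ps) by rewrite -map_comp.
    rewrite Hm -!map_comp; apply: eq_map => c /=.
    by rewrite -pty_ud; case: (repP c) => _ <-.
  pose R0 : msym := Tagged (fun Q => {w : (size (sar Q)).-tuple midty | map ud w == sar Q}) (exist _ w Hw).
  exists R0; split => //=; split; first by rewrite /msar /wr /= -!map_comp.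
  have Hszs : map size (map tup (map rep cs)) = szs R0.
    rewrite /szs /msar /= -!map_comp; apply: eq_map => c /=.
    by rewrite size_tup //; apply: rep_valid.
  have Hflat : map (tyof A) (flatten (map tup (map rep cs))) = flatten (map ar (msar R0)).
    rewrite map_flatten /msar /= -!map_comp; congr flatten; apply: eq_map => c /=.
    by rewrite ty_tup //; apply: rep_valid.
  have Hfl : flatten (map (fun x : B => (proj1_sig x).2) (map f1 cs)) = flatten (map tup (map rep cs)).
    by rewrite -!map_comp.
  rewrite /dl_out /= Hfl.
  have Hnth : forall (j : 'I_(size (sar Q))) c0, forall x, geqv (nth x ps j) (rep (nth c0 cs j)) /\
      tnth w j = shape (rep (nth c0 cs j)) /\
      take (len R0 j) (drop (off R0 j) (flatten (map tup (map rep cs)))) = tup (rep (nth c0 cs j)).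
    move=> j c0 x.
    have Hj : j < size cs by rewrite Hscs.
    split; last split.
    - apply: gcls_geqv; rewrite (map_nth_eq x c0 Hm) ?Hsps //.
      by case: (repP (nth c0 cs j)).
    - by rewrite (tnth_nth (shape (rep c0))) /= -map_comp (nth_map c0).
    - rewrite /len /off (blockK Hszs) ?size_map //.
      by rewrite (set_nth_default (tup (rep c0))) ?size_map // -map_comp (nth_map c0).
  case: Hc => [[t [a [ds [Ha [Hr Eps]]]]]|[R [a [es [Ha [Hr Eps]]]]]].
  + have Hsds : size ds = size (sar Q) by rewrite -Hscs -Hsps Eps size_map.
    have Hds : size (map (@idxD t) ds) == size (sar Q) by rewrite size_map Hsds.
    pose cs' := Tuple Hds.
    have Hrel : Defs.rel (gD g t) (tag R0) (map (@elD t) (tval cs')).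
      by rewrite /= -map_comp (eq_map (@elD_idx t)) map_id.
    have Hts : map (tyof A) (a :: flatten (map tup (map rep cs))) = t :: flatten (map ar (msar R0)).
      by rewrite /= Ha Hflat.
    have [v [Hty Hv']] := exists_v Hts.
    have Hv1 : map v (drop 1 (E (size (t :: flatten (map ar (msar R0)))))) = flatten (map tup (map rep cs)).
      by rewrite map_drop Hv' drop1.
    rewrite -Hv1; apply: (@derR (IO R0) (R5D R0 t cs') v (In_R5D Hrel) Hty) => //.
    move: Hv'; rewrite /= => Hv'.
    move=> b /In_map [j [_ ->]] /=.
    rewrite map_cat !map_blk Hv' add1n /= take0.
    have Hjc : (j < size cs)%N by rewrite Hscs.
    have Hjd : (j < size ds)%N by rewrite Hsds.
    have [c0 _] := ex_def Hjc.
    have [x0 _] := ex_def Hjd.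
    case: (Hnth j c0 (@PD _ _ g A t a x0)) => G [Sw Tk].
    rewrite Sw Tk (tnth_nth (idxD x0)) /= (nth_map x0) ?Hsds // elD_idx.
    rewrite Eps (nth_map x0) ?Hsds // in G.
    exact: (C_IE _ G Ha).
  + have Hses : size es = size (sar Q) by rewrite -Hscs -Hsps Eps size_map.
    have Hes : size (map (@idxR R) es) == size (sar Q) by rewrite size_map Hses.
    pose cs' := Tuple Hes.
    have Hrel : Defs.rel (gR g R) (tag R0) (map (@elR R) (tval cs')).
      by rewrite /= -map_comp (eq_map (@elR_idx R)) map_id.
    have Hsa : size a = size (sar R) by rewrite -(HA Ha) size_map.
    have Hts : map (tyof A) (a ++ flatten (map tup (map rep cs))) = sar R ++ flatten (map ar (msar R0)).
      by rewrite map_cat (HA Ha) Hflat.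
    have [v [Hty Hv']] := exists_v Hts.
    have Hv1 : map v (drop (size (sar R)) (E (size (sar R ++ flatten (map ar (msar R0)))))) =
               flatten (map tup (map rep cs)).
      by rewrite map_drop Hv' (drop_size_cat _ Hsa).
    rewrite -Hv1; apply: (@derR (IO R0) (R5R R0 R cs') v (In_R5R Hrel) Hty) => //.
    * by move=> b [<-|[]]; rewrite /= map_blk Hv' drop0 (take_size_cat _ Hsa).
    * move=> b /In_map [j [_ ->]] /=.
      rewrite map_cat !map_blk Hv' drop0 (take_size_cat _ Hsa) addnC -drop_drop (drop_size_cat _ Hsa).
      have Hjc : (j < size cs)%N by rewrite Hscs.
      have Hje : (j < size es)%N by rewrite Hses.
      have [c0 _] := ex_def Hjc.
      have [x0 _] := ex_def Hje.
      case: (Hnth j c0 (@PR _ _ g A R a x0)) => G [Sw Tk].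
      rewrite Sw Tk (tnth_nth (idxR x0)) /= (nth_map x0) ?Hses // elR_idx.
      rewrite Eps (nth_map x0) ?Hses // in G.
      exact: (C_IE _ G Ha).
Qed.

End OnA.

Lemma wf_psi : wf_dlu psi.
Proof.
split; last by move=> r /=; apply/esym/eqP; exact: (proj2_sig (tagged r)).
split; [|split].
- by move=> t r; apply: wf_rules.
- by move=> R r; apply: wf_rules.
- by [].
Qed.

Lemma hequiv (A : structure P) (HA : wt_structure A) : hom_equiv (gadget_apply g A) (dlu_apply psi A).
Proof. by split; [exists (f1 HA); exact: hom_f1 | exists (f2 HA); exact: hom_f2]. Qed.

End Constr.

Unset Implicit Arguments.

Theorem mainTheorem4 (P S : signature) (g : gadget P S) :
  wf_gadget g ->
  exists psi : dlu P S,
    wf_dlu psi /\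
    forall A : structure P, wt_structure A ->
      hom_equiv (gadget_apply g A) (dlu_apply psi A).
Proof.
case=> HD [HR Hp].
pose lD := fun t => proj1_sig (constructive_indefinite_description _ (proj2 (HD t))).
pose lR := fun R => proj1_sig (constructive_indefinite_description _ (proj2 (HR R))).
have lD_all : forall t (d : gD g t), List.In d (lD t).
  by move=> t d; rewrite /lD; case: constructive_indefinite_description => l Hl /=.
have lR_all : forall R (e : gR g R), List.In e (lR R).
  by move=> R e; rewrite /lR; case: constructive_indefinite_description => l Hl /=.
exists (psi lD_all lR_all); split; first exact: wf_psi.
move=> A HA; apply: hequiv => //.
- by move=> t; case: (HD t).
- by move=> R; case: (HR R).
Qed.
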